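(* For every $n\ge 1$ and every $2$-colouring of the edges of $Q_n$, there is a monochromatic geodesic of length $\lceil n/2\rceil$.
   Context: The hypercube $Q_n$ has vertex set $\{0,1\}^n$, two vertices adjacent iff they differ in exactly one coordinate; the direction of an edge is that coordinate. A path is a geodesic if no two of its edges have the same direction; length is the number of edges. A path is monochromatic if all its edges receive the same colour. *)

(* Defs.v *)
From mathcomp Require Import all_boot.
Set Implicit Arguments. Unset Strict Implicit. Unset Printing Implicit Defensive.

Definition vertex (n : nat) := {ffun 'I_n -> bool}.

Definition hdist n (x y : vertex n) : nat := #|[set i | x i != y i]|.

Definition adj n (x y : vertex n) : bool := hdist x y == 1.

Definition edge_dir n (x y : vertex n) (i : 'I_n) : bool := x i != y i.

(* A 2-colouring of the edges of Q_n: a colour for each (unordered) edge,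
   represented as a symmetric function on pairs of vertices (values on
   non-adjacent pairs are irrelevant). *)
Definition edge_colouring n (c : vertex n -> vertex n -> bool) : Prop :=
  forall x y, adj x y -> c x y = c y x.

(* A path x0 :: p with consecutive vertices adjacent. Its length is size p. *)
Definition is_path n (x0 : vertex n) (p : seq (vertex n)) : bool :=
  path (@adj n) x0 p.

Definition edges n (x0 : vertex n) (p : seq (vertex n)) :=
  zip (x0 :: p) p.

Definition geodesic n (x0 : vertex n) (p : seq (vertex n)) : Prop :=
  forall k l (i : 'I_n), k < l < size p ->
    edge_dir (nth x0 (x0 :: p) k) (nth x0 p k) i ->
    ~~ edge_dir (nth x0 (x0 :: p) l) (nth x0 p l) i.

Definition monochromatic n (c : vertex n -> vertex n -> bool)
    (x0 : vertex n) (p : seq (vertex n)) : Prop :=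
  exists col : bool, all (fun e => c e.1 e.2 == col) (edges x0 p).

(* Main.v *)
Require Import Defs.
From mathcomp Require Import all_boot.
From mathcomp Require Import zify.
Set Implicit Arguments. Unset Strict Implicit. Unset Printing Implicit Defensive.

Definition flip n (v : vertex n) (d : 'I_n) : vertex n :=
  [ffun j => if j == d then ~~ v j else v j].

Lemma flipK n (v : vertex n) d : flip (flip v d) d = v.
Proof. apply/ffunP => j; rewrite !ffunE; case: eqP => // _; by rewrite negbK. Qed.

Lemma adj_flip n (v : vertex n) d : adj v (flip v d).
Proof.
rewrite /adj /hdist.
have -> : [set i | v i != flip v d i] = [set d].
  by apply/setP => j; rewrite !inE ffunE; case: (j == d); case: (v j).
by rewrite cards1.
Qed.

Lemma edge_dir_flip n (v : vertex n) d i : edge_dir v (flip v d) i = (i == d).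
Proof. by rewrite /edge_dir ffunE; case: (i == d); case: (v i). Qed.

Fixpoint run n (c : vertex n -> vertex n -> bool) (col : bool) (v : vertex n)
  (ds : seq 'I_n) : seq ('I_n * vertex n) :=
  if ds is d :: ds' then
    if c v (flip v d) == col then (d, flip v d) :: run c col (flip v d) ds'
    else run c col v ds'
  else [::].

Definition step n (c : vertex n -> vertex n -> bool) col d (v : vertex n) :=
  if c v (flip v d) == col then flip v d else v.

Lemma size_run_cons n c col (v : vertex n) d ds :
  size (run c col v (d :: ds)) =
  nat_of_bool (c v (flip v d) == col) + size (run c col (step c col d v) ds).
Proof. by rewrite /= /step; case: ifP. Qed.

Lemma stepK n (c : vertex n -> vertex n -> bool) col d :
  edge_colouring c -> cancel (step c col d) (step c col d).
Proof.
move=> Hc v; case H: (c v (flip v d) == col); rewrite /step H /= ?H //.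
by rewrite flipK -(Hc v (flip v d) (adj_flip v d)) H.
Qed.

Lemma sum_run n (c : vertex n -> vertex n -> bool) col ds :
  edge_colouring c ->
  \sum_(v : vertex n) size (run c col v ds) =
  \sum_(d <- ds) \sum_(v : vertex n) nat_of_bool (c v (flip v d) == col).
Proof.
move=> Hc; elim: ds => [|d ds IH]; first by rewrite big_nil big1.
rewrite big_cons -IH.
under eq_bigr do rewrite size_run_cons.
rewrite big_split /=; congr (_ + _).
by rewrite [RHS](reindex_inj (can_inj (stepK col d Hc))).
Qed.

Lemma sum_const_seq (T : Type) (s : seq T) (K : nat) :
  \sum_(x <- s) K = size s * K.
Proof. elim: s => [|x s IH]; by rewrite ?big_nil ?big_cons ?IH. Qed.

Lemma sum_both n (c : vertex n -> vertex n -> bool) ds :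
  edge_colouring c ->
  \sum_(v : vertex n) (size (run c true v ds) + size (run c false v ds)) =
  size ds * #|{: vertex n}|.
Proof.
move=> Hc; rewrite big_split /= !sum_run // -big_split /=.
rewrite -sum_const_seq; apply: eq_bigr => d _.
rewrite -big_split /= -sum1_card; apply: eq_bigr => v _.
by case: (c v (flip v d)).
Qed.

Fixpoint good n (c : vertex n -> vertex n -> bool) col (v : vertex n)
  (r : seq ('I_n * vertex n)) : bool :=
  if r is (d, w) :: r' then [&& w == flip v d, c v w == col & good c col w r']
  else true.

Lemma good_run n c col (v : vertex n) ds : good c col v (run c col v ds).
Proof.
elim: ds v => [|d ds IH] v //=; case: ifP => H //=.
by rewrite eqxx H IH.
Qed.

Lemma subseq_run n c col (v : vertex n) ds : subseq (map fst (run c col v ds)) ds.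
Proof.
elim: ds v => [|d ds IH] v //=; case: ifP => _ /=.
  by rewrite eqxx IH.
exact: subseq_trans (IH v) (subseq_cons ds d).
Qed.

Lemma good_take n c col (v : vertex n) r m : good c col v r -> good c col v (take m r).
Proof.
elim: r v m => [|[d w] r IH] v [|m] //= /and3P [-> -> H] /=; exact: IH.
Qed.

Lemma good_path n c col (v : vertex n) r : good c col v r -> is_path v (map snd r).
Proof.
rewrite /is_path; elim: r v => [|[d w] r IH] v //= /and3P [/eqP -> _ H].
by rewrite adj_flip IH.
Qed.

Lemma good_mono n c col (v : vertex n) r : good c col v r ->
  all (fun e => c e.1 e.2 == col) (edges v (map snd r)).
Proof.
rewrite /edges; elim: r v => [|[d w] r IH] v //= /and3P [_ -> H] /=.
exact: IH.
Qed.

Lemma good_nth n c col (v : vertex n) r (x0 : vertex n) (d0 : 'I_n) k i :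
  good c col v r -> k < size r ->
  edge_dir (nth x0 (v :: map snd r) k) (nth x0 (map snd r) k) i =
  (i == nth d0 (map fst r) k).
Proof.
elim: r v k => [|[d w] r IH] v k //= /and3P [/eqP -> _ H].
case: k => [|k] /= Hk; first exact: edge_dir_flip.
exact: IH.
Qed.

Theorem corollary10 (n : nat) (c : vertex n -> vertex n -> bool) :
  1 <= n -> edge_colouring c ->
  exists (x0 : vertex n) (p : seq (vertex n)),
    [/\ is_path x0 p, geodesic x0 p, monochromatic c x0 p
      & size p = uphalf n].
Proof.
move=> Hn Hc.
have d0 : 'I_n by case: n c Hn Hc => // n' _ _ _; exact: ord0.
set E := enum 'I_n.
have HE : size E = n by rewrite /E size_enum_ord.
have Hpos : 0 < #|{: vertex n}| by apply/card_gt0P; exists [ffun _ => false].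
have [v Hv] : exists v : vertex n, n <= size (run c true v E) + size (run c false v E).
  case: (boolP [exists v : vertex n, n <= size (run c true v E) + size (run c false v E)]).
    by move/existsP.
  rewrite negb_exists => /forallP Hall; exfalso.
  have := sum_both E Hc; rewrite HE => Hs.
  have : \sum_(v : vertex n) (size (run c true v E) + size (run c false v E))
          <= \sum_(v : vertex n) n.-1.
    apply: leq_sum => v _; have := Hall v; rewrite -ltnNge; lia.
  rewrite Hs sum_nat_const => Hle.
  have E1 : #|(xpredT : pred (vertex n))| = #|vertex n| by [].
  rewrite E1 in Hle; move: Hle Hpos Hn; generalize #|vertex n| => N; nia.
have [col Hcol] : exists col, uphalf n <= size (run c col v E).
  have := uphalf_half n; have := odd_double_half n.
  case: (leqP (uphalf n) (size (run c true v E))) => H; first by exists true.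
  exists false; lia.
set r := take (uphalf n) (run c col v E).
have Hg : good c col v r by apply: good_take; apply: good_run.
have Hu : uniq (map fst r).
  rewrite /r map_take; apply: take_uniq.
  apply: subseq_uniq (subseq_run c col v E) _; exact: enum_uniq.
exists v, (map snd r); split.
- exact: good_path Hg.
- move=> k l i /andP [Hkl Hl] Hk; rewrite size_map in Hl.
  have Hk' : k < size r by exact: ltn_trans Hkl Hl.
  rewrite (good_nth v d0 i Hg Hk') in Hk.
  rewrite (good_nth v d0 i Hg Hl) (eqP Hk).
  rewrite nth_uniq ?size_map //; apply/eqP => Ekl; by rewrite Ekl ltnn in Hkl.
- by exists col; apply: good_mono Hg.
- by rewrite size_map /r size_takel.
Qed.
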